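(* Let $\mathcal{S}$ be a finite skew translation generalized quadrangle of order $s$ with $s$ even, with elation group $G$ (of order $s^3$) and associated $4$-gonal family $(G,\{A_i\}_{i=0}^s,\{A_i^*\}_{i=0}^s)$, and let $U_0:=\bigcap_{i=0}^s A_i^*$. For $g\in G$ define \[\chi_S(g)=\frac{1}{2s^2}\sum_{i=0}^s\Big(|C_G(g)|(s|A_i\cap g^G|+|A_i^*\cap g^G|)-|G/G'|(s|A_i\cap gG'|+|A_i^*\cap gG'|)\Big),\] \[\chi_T(g)=\frac{1}{2s^2}\sum_{i=0}^s\Big(|C_G(g)|(s|A_i\cap g^G|-|A_i^*\cap g^G|)-|G/G'|(s|A_i\cap gG'|-|A_i^*\cap gG'|)\Big).\] Then $\chi_S$ and $\chi_T$ coincide on $U_0$, and for $g\in U_0$, \[\chi_S(g)=\begin{cases}0,& g\in U_0\setminus G',\\ -\frac{s+1}{2s}|G/G'|,& g\in G'\setminus\{1\},\\ \frac{s+1}{2s}(s^3-|G/G'|),& g=1.\end{cases}\]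
   Context: A generalized quadrangle of order $s$: each line has $s+1$ points, each point is on $s+1$ lines, and for each non-incident point-line pair $(P,\ell)$ there is a unique point on $\ell$ collinear with $P$. An elation about $P$ is an automorphism that is the identity or fixes each line through $P$ and no point not collinear with $P$; a symmetry about $P$ is an elation about $P$ fixing every point collinear with $P$. $\mathcal{S}$ is an elation generalized quadrangle with base point $P$ and elation group $G$ if $G$ consists of elations about $P$ and acts regularly on the points not collinear with $P$; it is a skew translation generalized quadrangle if $G$ contains a subgroup of $s$ symmetries about $P$. The associated $4$-gonal family: fix a point $y$ not collinear with $P$, let $M_0,\dots,M_s$ be the lines through $y$, let $z_i$ be the unique point of $M_i$ collinear with $P$, and let $A_i$, $A_i^*$ be the stabilizers in $G$ of $M_i$ and $z_i$ respectively. $g^G$ is the conjugacy class, $C_G(g)$ the centralizer, $G'$ the derived subgroup. (The formulas for $\chi_S,\chi_T$ are the general ones with $t=s$.) *)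

(* Defs.v *)
From mathcomp Require Import all_boot all_order all_algebra all_fingroup all_solvable.
Set Implicit Arguments. Unset Strict Implicit. Unset Printing Implicit Defensive.
Import GRing.Theory Num.Theory.

(* A finite incidence geometry: points form a finType Pt, lines are
   (given as) sets of points, collected in L : {set {set Pt}};
   incidence is membership. *)

Definition collinear (Pt : finType) (L : {set {set Pt}}) (x y : Pt) : bool :=
  [exists l in L, (x \in l) && (y \in l)].

Definition is_GQ (Pt : finType) (L : {set {set Pt}}) (s : nat) : Prop :=
  [/\ (forall l, l \in L -> #|l| = s.+1),
      (forall x : Pt, #|[set l in L | x \in l]| = s.+1),
      (forall x y : Pt, x != y -> #|[set l in L | (x \in l) && (y \in l)]| <= 1)
    & (forall (x : Pt) l, l \in L -> x \notin l ->
         exists! z, z \in l /\ collinear L x z)].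

(* Automorphisms are modelled as permutations of the points mapping lines to
   lines (a permutation of a finite set preserving L induces a bijection of L). *)
Definition is_coll (Pt : finType) (L : {set {set Pt}}) (g : {perm Pt}) : Prop :=
  forall l, l \in L -> g @: l \in L.

Definition is_elation (Pt : finType) (L : {set {set Pt}}) (P : Pt) (g : {perm Pt}) : Prop :=
  g = 1%g \/
  ((forall l, l \in L -> P \in l -> g @: l = l) /\
   (forall x, ~~ collinear L P x -> g x != x)).

Definition is_symmetry (Pt : finType) (L : {set {set Pt}}) (P : Pt) (g : {perm Pt}) : Prop :=
  is_elation L P g /\ (forall x, collinear L P x -> g x = x).

Definition is_EGQ (Pt : finType) (L : {set {set Pt}}) (s : nat) (P : Pt)
    (G : {group {perm Pt}}) : Prop :=
  [/\ is_GQ L s,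
      (forall g, g \in G -> is_coll L g /\ is_elation L P g)
    & (forall x y, ~~ collinear L P x -> ~~ collinear L P y ->
         exists! g, g \in G /\ g x = y)].

Definition is_STGQ (Pt : finType) (L : {set {set Pt}}) (s : nat) (P : Pt)
    (G : {group {perm Pt}}) : Prop :=
  is_EGQ L s P G /\
  exists H : {group {perm Pt}},
    [/\ H \subset G, #|H| = s & forall h, h \in H -> is_symmetry L P h].

(* The 4-gonal family w.r.t. a point y not collinear with P:
   the lines M through y, z_M the point of M collinear with P,
   A_M = stabilizer of M in G, A*_M = stabilizer of z_M in G. *)
Definition lines_through (Pt : finType) (L : {set {set Pt}}) (y : Pt) :=
  [set M in L | y \in M].

Definition zpt (Pt : finType) (L : {set {set Pt}}) (P : Pt) (M : {set Pt}) : Pt :=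
  odflt P [pick z in M | collinear L P z].

Definition Astab (Pt : finType) (G : {group {perm Pt}}) (M : {set Pt}) :=
  [set g in G | g @: M == M].

Definition Astarstab (Pt : finType) (L : {set {set Pt}}) (P : Pt)
    (G : {group {perm Pt}}) (M : {set Pt}) :=
  [set g in G | g (zpt L P M) == zpt L P M].

Definition U0 (Pt : finType) (L : {set {set Pt}}) (P y : Pt) (G : {group {perm Pt}}) :=
  \bigcap_(M in lines_through L y) Astarstab L P G M.

Local Open Scope ring_scope.

Definition chi_gen (b : bool) (Pt : finType) (L : {set {set Pt}}) (s : nat) (P y : Pt)
    (G : {group {perm Pt}}) (g : {perm Pt}) : rat :=
  let e : rat := if b then 1 else -1 in
  (2 * (s ^ 2)%N%:R)^-1 *
  \sum_(M in lines_through L y)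
    ( #|'C_G[g]%g|%:R * (s%:R * #|Astab G M :&: (g ^: G)%g|%:R
                       + e * #|Astarstab L P G M :&: (g ^: G)%g|%:R)
    - #|(G / G^`(1))%g|%:R * (s%:R * #|Astab G M :&: (g *: G^`(1))%g|%:R
                       + e * #|Astarstab L P G M :&: (g *: G^`(1))%g|%:R)).

Definition chi_S := chi_gen true.
Definition chi_T := chi_gen false.

(* Main.v *)
Require Import Defs.
From mathcomp Require Import all_boot all_order all_algebra all_fingroup all_solvable.
From mathcomp Require Import zify.
From mathcomp Require Import ring.
Set Implicit Arguments. Unset Strict Implicit. Unset Printing Implicit Defensive.
Import GRing.Theory Num.Theory.

Section Geo.
Variables (Pt : finType) (L : {set {set Pt}}) (s : nat) (P y : Pt) (G : {group {perm Pt}}).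
Hypothesis hGQ : is_GQ L s.
Hypothesis hcoll : forall g, g \in G -> is_coll L g /\ is_elation L P g.
Hypothesis hreg : forall x y, ~~ collinear L P x -> ~~ collinear L P y ->
         exists! g, g \in G /\ g x = y.
Hypothesis hy : ~~ collinear L P y.

Lemma collP x z : reflect (exists l, [/\ l \in L, x \in l & z \in l]) (collinear L x z).
Proof.
apply: (iffP existsP) => [[l /andP[lL /andP[xl zl]]]|[l [lL xl zl]]]; first by exists l.
by exists l; rewrite lL xl zl.
Qed.

Lemma coll_sym x z : collinear L x z = collinear L z x.
Proof. by apply/collP/collP => -[l [? ? ?]]; exists l. Qed.

Lemma two_lines l1 l2 x z : l1 \in L -> l2 \in L -> x != z ->
  x \in l1 -> z \in l1 -> x \in l2 -> z \in l2 -> l1 = l2.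
Proof.
case: hGQ => _ _ h3 _ l1L l2L xz xl1 zl1 xl2 zl2.
apply/eqP; apply: contraT => ne.
have := h3 _ _ xz.
have sub : [set l1; l2] \subset [set l in L | (x \in l) && (z \in l)].
  by apply/subsetP => l; rewrite !inE => /orP[]/eqP->; rewrite ?l1L ?l2L ?xl1 ?zl1 ?xl2 ?zl2.
move/(leq_trans (subset_leq_card sub)); by rewrite cards2 ne.
Qed.

Lemma unique_proj l x z1 z2 : l \in L -> x \notin l -> z1 \in l -> z2 \in l ->
  collinear L x z1 -> collinear L x z2 -> z1 = z2.
Proof.
case: hGQ => _ _ _ h4 lL xl z1l z2l c1 c2.
have [z [_ hz]] := h4 x l lL xl.
by rewrite -(hz z1 (conj z1l c1)) (hz z2 (conj z2l c2)).
Qed.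

Lemma el_line k l w : k \in G -> l \in L -> P \in l -> w \in l -> k w \in l.
Proof.
move=> kG lL Pl wl; have [_ [->|[h _]]] := hcoll kG; first by rewrite perm1.
by rewrite -(h l lL Pl); apply: imset_f.
Qed.

Lemma el_collP k x : k \in G -> collinear L P x -> collinear L P (k x).
Proof.
move=> kG /collP[l [lL Pl xl]]; apply/collP; exists l; split=> //.
exact: el_line.
Qed.

Lemma el_coll k x z : k \in G -> collinear L x z -> collinear L (k x) (k z).
Proof.
move=> kG /collP[l [lL xl zl]]; apply/collP; exists (k @: l).
have [h _] := hcoll kG; split; [exact: h | exact: imset_f | exact: imset_f].
Qed.

Lemma el_ncoll k x : k \in G -> ~~ collinear L P x -> ~~ collinear L P (k x).
Proof.
move=> kG; apply: contra => /(el_collP (groupVr kG)).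
by rewrite -permM mulgV perm1.
Qed.

Lemma reg_inj k1 k2 : k1 \in G -> k2 \in G -> k1 y = k2 y -> k1 = k2.
Proof.
move=> k1G k2G e.
have [g [_ hg]] := hreg hy (el_ncoll k1G hy).
by rewrite -(hg k1 (conj k1G erefl)) (hg k2 (conj k2G (esym e))).
Qed.

Lemma reg_surj x : ~~ collinear L P x -> exists2 k, k \in G & k y = x.
Proof. move=> hx; have [g [[gG gx] _]] := hreg hy hx; by exists g. Qed.


Notation Ly := (lines_through L y).
Notation z := (zpt L P).
Notation A := (Astab G).
Notation As := (Astarstab L P G).

Lemma P_notin M : M \in Ly -> P \notin M.
Proof.
rewrite inE => /andP[ML yM]; apply: contra hy => PM.
by apply/collP; exists M.
Qed.

Lemma z_spec M : M \in Ly -> z M \in M /\ collinear L P (z M).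
Proof.
move=> MLy; rewrite /zpt; case: pickP => [w /andP[] //|none].
case: hGQ => _ _ _ h4; move: (MLy); rewrite inE => /andP[ML _].
have [w [[wM cw] _]] := h4 P M ML (P_notin MLy).
by move: (none w); rewrite wM cw.
Qed.

Lemma z_uniq M w : M \in Ly -> w \in M -> collinear L P w -> w = z M.
Proof.
move=> MLy wM cw; have [zM cz] := z_spec MLy.
move: (MLy); rewrite inE => /andP[ML _].
exact: (unique_proj ML (P_notin MLy)).
Qed.

Lemma z_ne_y M : M \in Ly -> z M != y.
Proof. move=> /z_spec[_ c]; apply: contraNneq hy => <-; exact c. Qed.

Lemma y_coll_z M : M \in Ly -> collinear L y (z M).
Proof.
move=> MLy; have [zM _] := z_spec MLy; move: MLy; rewrite inE => /andP[ML yM].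
by apply/collP; exists M.
Qed.

Lemma z_ncoll M N : M \in Ly -> N \in Ly -> M != N -> ~~ collinear L (z M) (z N).
Proof.
move=> MLy NLy MN; apply/negP => /collP[l [lL zMl zNl]].
have [zM _] := z_spec MLy; have [zN _] := z_spec NLy.
move: (MLy) (NLy); rewrite !inE => /andP[ML yM] /andP[NL yN].
have ynzM : y != z M by rewrite eq_sym z_ne_y.
have ynzN : y != z N by rewrite eq_sym z_ne_y.
case yl: (y \in l).
  have e1 := two_lines lL ML ynzM yl zMl yM zM.
  have e2 := two_lines lL NL ynzN yl zNl yN zN.
  by move: MN; rewrite -e1 -e2 eqxx.
have e := unique_proj lL (negbT yl) zMl zNl (y_coll_z MLy) (y_coll_z NLy).
have := two_lines ML NL ynzM yM zM yN; rewrite e => /(_ zN) eMN.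
by move: MN; rewrite eMN eqxx.
Qed.

Lemma zN_notin M N : M \in Ly -> N \in Ly -> M != N -> z N \notin M.
Proof.
move=> MLy NLy MN; apply: contra (z_ncoll MLy NLy MN) => zNM.
have [zM _] := z_spec MLy; move: MLy; rewrite inE => /andP[ML _].
by apply/collP; exists M.
Qed.


Lemma imsetM (k1 k2 : {perm Pt}) (M : {set Pt}) : (k1 * k2)%g @: M = k2 @: (k1 @: M).
Proof. by rewrite -imset_comp; apply: eq_imset => w; rewrite /= permM. Qed.

Lemma A_group M : group_set (A M).
Proof.
apply/group_setP; split; first by rewrite inE group1 (eq_imset _ (@perm1 _)) imset_id eqxx.
move=> a b; rewrite !inE => /andP[aG /eqP ea] /andP[bG /eqP eb].
by rewrite groupM // imsetM ea eb eqxx.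
Qed.

Lemma As_group M : group_set (As M).
Proof.
apply/group_setP; split; first by rewrite inE group1 perm1 eqxx.
move=> a b; rewrite !inE => /andP[aG /eqP ea] /andP[bG /eqP eb].
by rewrite groupM // permM ea eb eqxx.
Qed.

Canonical A_grp M := Group (A_group M).
Canonical As_grp M := Group (As_group M).

Lemma A_sub_As M : M \in Ly -> A M \subset As M.
Proof.
move=> MLy; apply/subsetP => k; rewrite !inE => /andP[kG /eqP kM]; rewrite kG /=.
have [zM cz] := z_spec MLy.
apply/eqP; apply: z_uniq => //; last exact: el_collP.
have hk : k (z M) \in k @: M by apply: imset_f.
by rewrite kM in hk.
Qed.

Lemma A_As_triv M N k : M \in Ly -> N \in Ly -> M != N ->
  k \in A M -> k \in As N -> k = 1%g.
Proof.
move=> MLy NLy MN; rewrite !inE => /andP[kG /eqP kM] /andP[_ /eqP kz].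
apply: reg_inj => //; rewrite perm1.
move: (MLy) (NLy); rewrite !inE => /andP[ML yM] /andP[NL yN].
have [zN _] := z_spec NLy.
apply: (unique_proj ML (zN_notin MLy NLy MN)).
- by rewrite -kM; apply: imset_f.
- done.
- by rewrite coll_sym -kz; apply: el_coll => //; exact: y_coll_z.
- by rewrite coll_sym; exact: y_coll_z.
Qed.

Lemma cardA M : M \in Ly -> s <= #|A M|.
Proof.
move=> MLy; have [zM cz] := z_spec MLy.
move: (MLy); rewrite inE => /andP[ML yM].
case: hGQ => h1 _ _ _.
have cM : #|M :\ z M| = s by move: (h1 M ML); rewrite (cardsD1 (z M)) zM => /eqP; rewrite eqSS => /eqP.
rewrite -cM; apply: leq_trans (leq_imset_card (fun k : {perm Pt} => k y) (A M)).
apply: subset_leq_card; apply/subsetP => x; rewrite !inE => /andP[xz xM].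
have xnc : ~~ collinear L P x.
  by apply: contra xz => cx; rewrite (z_uniq MLy xM cx).
have [k kG kyx] := reg_surj xnc.
have [lP [lPL PlP zlP]] : exists l, [/\ l \in L, P \in l & z M \in l].
  by apply/collP.
have kz : k (z M) = z M.
  have xnl : x \notin lP by apply: contra xnc => xl; apply/collP; exists lP.
  apply: (unique_proj lPL xnl) => //; first exact: el_line.
  - rewrite -kyx; apply: el_coll => //; exact: y_coll_z.
  - by apply/collP; exists M.
apply/imsetP; exists k => //; rewrite inE kG /=.
apply/eqP; apply: (@two_lines _ _ x (z M)) => //.
- by have [h _] := hcoll kG; apply: h.
- by rewrite -kyx; apply: imset_f.
- by rewrite -{1}kz; apply: imset_f.
Qed.


Lemma cardK M N : M \in Ly -> N \in Ly -> M != N -> #|As M :&: As N| <= s.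
Proof.
move=> MLy NLy MN.
have [zM cPzM] := z_spec MLy; have [zN cPzN] := z_spec NLy.
have [lP [lPL PlP zlP]] : exists l, [/\ l \in L, P \in l & z M \in l] by apply/collP.
pose f (k : {perm Pt}) := odflt lP [pick l in L | (z M \in l) && (k y \in l)].
have fspec k : k \in As M :&: As N -> [/\ f k \in L, z M \in f k & k y \in f k].
  rewrite !inE => /andP[/andP[kG /eqP kzM] _].
  rewrite /f; case: pickP => [l /andP[lL /andP[? ?]] //|none].
  have : collinear L (k y) (k (z M)) by apply: el_coll => //; exact: y_coll_z.
  by rewrite kzM => /collP[l [lL h1 h2]]; move: (none l); rewrite lL h1 h2.
case: hGQ => _ h2 _ _.
have cLz : #|[set l in L | z M \in l] :\ lP| = s.
  move: (h2 (z M)); rewrite (cardsD1 lP) inE lPL zlP => /eqP; rewrite eqSS => /eqP.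
  done.
rewrite -cLz -(card_in_imset (f := f)).
  apply: subset_leq_card; apply/subsetP => l /imsetP[k kK ->].
  have [fL zf kf] := fspec k kK; rewrite !inE fL zf !andbT.
  have kG : k \in G by move: kK; rewrite !inE => /andP[/andP[]].
  apply/eqP => e; move: (el_ncoll kG hy) => /negP; apply.
  by apply/collP; exists (f k); split => //; rewrite e.
move=> k1 k2 k1K k2K e.
have [fL zf k1f] := fspec k1 k1K; have [_ _ k2f] := fspec k2 k2K.
move: k1K k2K; rewrite !inE => /andP[/andP[k1G _] /andP[_ /eqP k1z]] /andP[/andP[k2G _] /andP[_ /eqP k2z]].
apply: reg_inj => //.
have zNf : z N \notin f k1.
  by apply: contra (z_ncoll MLy NLy MN) => h; apply/collP; exists (f k1).
apply: (unique_proj fL zNf k1f); first by rewrite e.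
- by rewrite coll_sym -{1}k1z; apply: el_coll => //; exact: y_coll_z.
- by rewrite coll_sym -{1}k2z; apply: el_coll => //; exact: y_coll_z.
Qed.


Lemma card_bigcup_le (I : finType) (D : {pred I}) (F : I -> {set Pt}) :
  #|\bigcup_(i in D) F i| <= \sum_(i in D) #|F i|.
Proof.
apply: (big_ind2 (fun (U : {set Pt}) n => #|U| <= n)); first by rewrite cards0.
  move=> U1 n1 U2 n2 h1 h2; case: (leq_card_setU U1 U2) => h _.
  exact: leq_trans h (leq_add h1 h2).
by [].
Qed.

Lemma cardG_le : #|G| <= s ^ 3.
Proof.
case: hGQ => h1 h2 h3 h4.
rewrite -(card_in_imset (f := fun k : {perm Pt} => k y) (D := G)); last first.
  by move=> k1 k2 k1G k2G; apply: reg_inj.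
have : 0 < #|[set l in L | P \in l]| by rewrite h2.
case/card_gt0P => l0; rewrite inE => /andP[l0L Pl0].
pose U := \bigcup_(w in l0 :\ P) \bigcup_(m in [set m in L | w \in m] :\ l0) (m :\ w).
apply: (@leq_trans #|U|).
  apply: subset_leq_card; apply/subsetP => x /imsetP[k kG ->].
  have xnc := el_ncoll kG hy.
  have xl0 : k y \notin l0 by apply: contra xnc => xl; apply/collP; exists l0.
  have [w [[wl0 cw] _]] := h4 _ _ l0L xl0.
  have [m [mL xm wm]] := collP _ _ cw.
  apply/bigcupP; exists w.
    rewrite !inE wl0 andbT; apply: contra xnc => /eqP <-; by rewrite coll_sym.
  apply/bigcupP; exists m.
    rewrite !inE mL wm !andbT; apply: contra xl0 => /eqP <-; done.
  rewrite !inE xm andbT; apply: contra xl0 => /eqP ->; done.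
apply: leq_trans (card_bigcup_le _ _) _.
have cl0 : #|l0 :\ P| = s.
  by move: (h1 l0 l0L); rewrite (cardsD1 P) Pl0 => /eqP; rewrite eqSS => /eqP.
apply: (@leq_trans (\sum_(w in l0 :\ P) s ^ 2)); last by rewrite sum_nat_const cl0 expnS.
apply: leq_sum => w; rewrite inE => /andP[_ wl0].
apply: leq_trans (card_bigcup_le _ _) _.
have cw : #|[set m in L | w \in m] :\ l0| = s.
  by move: (h2 w); rewrite (cardsD1 l0) inE l0L wl0 => /eqP; rewrite eqSS => /eqP.
apply: (@leq_trans (\sum_(m in [set m in L | w \in m] :\ l0) s)); last by rewrite sum_nat_const cw mulnn.
apply: leq_sum => m; rewrite !inE => /andP[_ /andP[mL wm]].
by move: (h1 m mL); rewrite (cardsD1 w) wm => /eqP; rewrite eqSS => /eqP ->.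
Qed.


Variable H : {group {perm Pt}}.
Hypothesis HsubG : H \subset G.
Hypothesis cardH : #|H| = s.
Hypothesis Hsym : forall h, h \in H -> is_symmetry L P h.

Lemma cardLy : #|Ly| = s.+1.
Proof. by case: hGQ => _ h2 _ _; rewrite /lines_through h2. Qed.

Lemma s_gt0 : 0 < s.
Proof.
have : 0 < #|Ly| by rewrite cardLy.
case/card_gt0P => M MLy; have [zM _] := z_spec MLy.
move: (MLy); rewrite inE => /andP[ML yM].
case: hGQ => h1 _ _ _; have := h1 M ML.
rewrite (cardsD1 y) yM => /eqP; rewrite eqSS => /eqP <-.
by apply/card_gt0P; exists (z M); rewrite !inE zM z_ne_y.
Qed.

Lemma exists_other M : M \in Ly -> exists2 N, N \in Ly & N != M.
Proof.
move=> MLy; have : 0 < #|Ly :\ M|.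
  have := cardLy; rewrite (cardsD1 M) MLy => /eqP; rewrite eqSS => /eqP ->; exact: s_gt0.
case/card_gt0P => N; rewrite !inE => /andP[NM NL]; exists N => //; by rewrite inE.
Qed.

Lemma H_sub_As M : M \in Ly -> H \subset As M.
Proof.
move=> MLy; apply/subsetP => h hH; rewrite inE (subsetP HsubG h hH) /=.
have [_ cz] := z_spec MLy; have [_ hf] := Hsym hH.
by rewrite hf.
Qed.

Lemma AcapH M : M \in Ly -> A M :&: H = 1%g.
Proof.
move=> MLy; have [N NLy NM] := exists_other MLy.
apply/eqP; rewrite eqEsubset sub1G andbT; apply/subsetP => k; rewrite inE => /andP[kA kH].
rewrite inE; apply/eqP; apply: (A_As_triv MLy NLy) => //; first by rewrite eq_sym.
exact: (subsetP (H_sub_As NLy)).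
Qed.

Lemma cardAs M : M \in Ly -> s * s <= #|As M|.
Proof.
move=> MLy; have := mul_cardG (A_grp M) H.
rewrite /= AcapH // cards1 muln1 => e.
apply: (@leq_trans (#|A M| * #|H|)); first by rewrite cardH leq_mul2r cardA ?orbT.
rewrite e; apply: subset_leq_card.
by rewrite (mul_subG (G := As_grp M)) ?A_sub_As ?H_sub_As.
Qed.


Lemma As_subG M : As M \subset G.
Proof. by apply/subsetP => k; rewrite inE => /andP[]. Qed.

Lemma KeqH M N : M \in Ly -> N \in Ly -> M != N -> As M :&: As N = H.
Proof.
move=> MLy NLy MN; apply/eqP; rewrite eq_sym eqEcard subsetI !H_sub_As //=.
by rewrite cardH cardK.
Qed.

Lemma two_lines_y : exists M N, [/\ M \in Ly, N \in Ly & M != N].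
Proof.
have : 0 < #|Ly| by rewrite cardLy.
case/card_gt0P => M MLy; have [N NLy NM] := exists_other MLy.
by exists M, N; rewrite eq_sym.
Qed.

Lemma conj_fix_z (h g : {perm Pt}) M : M \in Ly -> h \in H -> g \in G ->
  (h ^ g)%g (z M) = z M.
Proof.
move=> MLy hH gG; have [_ cz] := z_spec MLy; have [_ hf] := Hsym hH.
rewrite /conjg !permM hf ?permKV //.
exact: el_collP (groupVr gG) cz.
Qed.

Lemma Hnorm h g : h \in H -> g \in G -> (h ^ g)%g \in H.
Proof.
move=> hH gG; have [M [N [MLy NLy MN]]] := two_lines_y.
have hG := subsetP HsubG h hH.
by rewrite -(KeqH MLy NLy MN) !inE groupJ //= !conj_fix_z // !eqxx.
Qed.

Lemma prodG M N : M \in Ly -> N \in Ly -> M != N ->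
  (As M * As N)%g = G /\ #|G| = s ^ 3.
Proof.
move=> MLy NLy MN; have := mul_cardG (As_grp M) (As_grp N); rewrite /= KeqH // cardH => e.
have sub : (As M * As N)%g \subset G by rewrite mul_subG ?As_subG.
have le1 : s ^ 3 <= #|(As M * As N)%g|.
  rewrite -(leq_pmul2r s_gt0) -e.
  have -> : s ^ 3 * s = (s * s) * (s * s) by rewrite !expnS expn0 !mulnA muln1.
  by apply: leq_mul; apply: cardAs.
have le2 := leq_trans le1 (subset_leq_card sub).
have eG : #|G| = s ^ 3 by apply/eqP; rewrite eqn_leq le2 cardG_le.
split => //; apply/eqP; rewrite eqEcard sub eG //.
Qed.


Lemma card_sum_ind (B : {set {perm Pt}}) : #|B| = \sum_k (if k \in B then 1 else 0).
Proof. by rewrite -big_mkcond sum1_card. Qed.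

Lemma union_As x : x \in G -> exists2 M, M \in Ly & x \in As M.
Proof.
move=> xG; apply/exists_inP; apply: contraT; rewrite negb_exists_in => /forall_inP nx.
have [M0 [N0 [M0Ly N0Ly MN0]]] := two_lines_y.
have [_ eG] := prodG M0Ly N0Ly MN0.
have xH : x \notin H by apply: contra (nx M0 M0Ly); apply: (subsetP (H_sub_As M0Ly)).
pose T := (G :\: H) :\ x.
have up : \sum_(M in Ly) #|As M :\: H| <= #|T|.
  rewrite (eq_bigr _ (fun M _ => card_sum_ind (As M :\: H))) exchange_big /=.
  rewrite card_sum_ind; apply: leq_sum => k _.
  case kT: (k \in T); last first.
    rewrite big1 // => M MLy; case: ifP => // kS.
    have kAs : k \in As M by move: kS; rewrite inE => /andP[].
    move: kT; rewrite !inE; move: kS; rewrite !inE => /andP[-> /andP[-> _]].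
    rewrite !andbT => /negbFE/eqP ek.
    by move: (nx M MLy); rewrite -ek kAs.
  rewrite -big_mkcondr sum1_card leqNgt; apply/negP => /card_gt1P[M [N [MS NS MN]]].
  move: MS NS => /andP[MLy kSM] /andP[NLy kSN].
  have /setDP[kM kH] : k \in As M :\: H := kSM.
  have /setDP[kN _] : k \in As N :\: H := kSN.
  by move: kH; rewrite -(KeqH MLy NLy MN) inE kM kN.
have lo : #|Ly| * (s * s - s) <= \sum_(M in Ly) #|As M :\: H|.
  rewrite -sum_nat_const; apply: leq_sum => M MLy.
  rewrite cardsD (setIidPr (H_sub_As MLy)) cardH leq_sub2r //; exact: cardAs.
have cT : #|T| + 1 + s = s ^ 3.
  have := cardsID H G; rewrite (setIidPr HsubG) cardH eG => <-.
  have xGH : x \in G :\: H by rewrite inE xH xG.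
  by rewrite /T (cardsD1 x (G :\: H)) xGH; lia.
have := leq_trans lo up; rewrite cardLy.
have := s_gt0; move: cT; nia.
Qed.


Lemma As_norm M h g : M \in Ly -> h \in As M -> g \in G -> (h ^ g)%g \in As M.
Proof.
move=> MLy hA gG.
have hG := subsetP (As_subG M) h hA.
have [K KLy hgK] := union_As (groupJ hG gG).
case: (eqVneq M K) => [-> //|MK].
have [eP _] := prodG MLy KLy MK.
have : g \in (As M * As K)%g by rewrite eP.
case/mulsgP => b c bA cK eg; rewrite eg in hgK *.
have cG := subsetP (As_subG K) c cK.
have hb1 : (h ^ b)%g \in As M by rewrite groupJ.
have hb2 : (h ^ b)%g \in As K.
  have -> : (h ^ b = (h ^ (b * c)) ^ c^-1)%g by rewrite conjgM conjgK.
  by apply: (@groupJ _ (As_grp K)); [exact: hgK | rewrite groupV; exact: cK].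
have hbH : (h ^ b)%g \in H by rewrite -(KeqH MLy KLy MK) inE hb1 hb2.
rewrite conjgM; apply: (subsetP (H_sub_As MLy)); exact: Hnorm.
Qed.

Lemma comm_distinct M N a b : M \in Ly -> N \in Ly -> M != N ->
  a \in As M -> b \in As N -> [~ a, b]%g \in H.
Proof.
move=> MLy NLy MN aM bN.
have aG := subsetP (As_subG M) a aM; have bG := subsetP (As_subG N) b bN.
rewrite -(KeqH MLy NLy MN) inE; apply/andP; split.
  by rewrite commgEl groupM ?groupV ?As_norm.
by rewrite commgEr groupM ?As_norm ?groupV.
Qed.

Hypothesis seven : ~~ odd s.

Lemma s_ge2 : 2 <= s.
Proof. have := s_gt0; move: seven; case: s => [|[|n]] //. Qed.

Lemma comm_H x1 x2 : x1 \in G -> x2 \in G -> [~ x1, x2]%g \in H.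
Proof.
move=> x1G x2G; have [I ILy x1I] := union_As x1G.
have [J JLy JI] := exists_other ILy.
have : 0 < #|(Ly :\ I) :\ J|.
  have := cardLy; rewrite (cardsD1 I) ILy (cardsD1 J) in_setD1 JI JLy /= => e.
  have := s_ge2; lia.
case/card_gt0P => K; rewrite in_setD1 => /andP[KJ]; rewrite in_setD1 => /andP[KI KLy].
have JK : J != K by rewrite eq_sym.
have [eP _] := prodG JLy KLy JK.
move: x2G; rewrite -eP => /mulsgP[a c aJ cK ->].
have cG := subsetP (As_subG K) c cK.
rewrite commgMJ groupM //; first by apply: (comm_distinct ILy KLy) => //; rewrite eq_sym.
by apply: Hnorm => //; apply: (comm_distinct ILy JLy) => //; rewrite eq_sym.
Qed.

Lemma der1_H : G^`(1)%g \subset H.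
Proof.
rewrite derg1 gen_subG; apply/subsetP => c /imset2P[x1 x2 x1G x2G ->]; exact: comm_H.
Qed.


Lemma card_sub1 (S : {set {perm Pt}}) : S \subset [1]%g -> #|S| = (1%g \in S).
Proof.
rewrite subset1 => /orP[]/eqP->; first by rewrite cards1 inE eqxx.
by rewrite cards0 inE.
Qed.

Local Open Scope ring_scope.

Lemma main_sec g : g \in U0 L P y G ->
    chi_S L s P y G g = chi_T L s P y G g /\
    (g \notin G^`(1)%g -> chi_S L s P y G g = 0) /\
    (g \in G^`(1)%g -> g != 1%g ->
       chi_S L s P y G g = - ((s.+1)%:R / (2 * s%:R)) * #|(G / G^`(1))%g|%:R) /\
    (g = 1%g ->
       chi_S L s P y G g = ((s.+1)%:R / (2 * s%:R)) * ((s ^ 3)%N%:R - #|(G / G^`(1))%g|%:R)).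
Proof.
move=> /bigcapP gU.
have [M0 [N0 [M0Ly N0Ly MN0]]] := two_lines_y.
have [_ eG] := prodG M0Ly N0Ly MN0.
have gH : g \in H by rewrite -(KeqH M0Ly N0Ly MN0) inE !gU.
have gG := subsetP HsubG g gH.
have clH : (g ^: G)%g \subset H.
  apply/subsetP => k; rewrite /class; move/imsetP => [x xG ->]; exact: Hnorm.
have coH : (g *: G^`(1))%g \subset H.
  apply/subsetP => k; rewrite mem_lcoset => kd.
  have := subsetP der1_H _ kd; rewrite groupMl // groupV //.
have c1 M : M \in Ly -> #|A M :&: (g ^: G)%g| = (g == 1%g).
  move=> MLy; rewrite card_sub1; last first.
    by rewrite -(AcapH MLy) setIS.
  rewrite inE group1 /= /class; congr (nat_of_bool _); apply/idP/eqP => [/imsetP[x xG e]|->]; last first.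
    by apply/imsetP; exists 1%g => //; rewrite conj1g.
  by apply/eqP; rewrite -(conjg_eq1 g x) -e.
have c2 M : M \in Ly -> #|As M :&: (g ^: G)%g| = #|(g ^: G)%g|.
  by move=> MLy; rewrite (setIidPr (subset_trans clH (H_sub_As MLy))).
have c3 M : M \in Ly -> #|A M :&: (g *: G^`(1))%g| = (g \in G^`(1))%g.
  move=> MLy; rewrite card_sub1; last by rewrite -(AcapH MLy) setIS.
  by rewrite inE group1 /= mem_lcoset mulg1 groupV.
have c4 M : M \in Ly -> #|As M :&: (g *: G^`(1))%g| = #|G^`(1)%g|.
  by move=> MLy; rewrite (setIidPr (subset_trans coH (H_sub_As MLy))) card_lcoset.
have hac : (#|'C_G[g]%g| * #|(g ^: G)%g|)%N = #|G|.
  by rewrite -index_cent1 Lagrange ?subsetIl.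
have hqd : (#|(G / G^`(1))%g| * #|G^`(1)%g|)%N = #|G|.
  by rewrite card_quotient ?der_norm // mulnC Lagrange ?der_sub.
have s0 : s%:R != 0 :> rat by rewrite pnatr_eq0 -lt0n s_gt0.
have key b : chi_gen b L s P y G g = ((s.+1)%:R / (2 * s%:R)) *
    ((g == 1%g)%:R * #|'C_G[g]%g|%:R - (g \in G^`(1)%g)%:R * #|(G / G^`(1))%g|%:R).
  rewrite /chi_gen.
  set a := #|'C_G[g]%g|; set c := #|(g ^: G)%g|; set q := #|(G / G^`(1))%g|.
  set d := #|G^`(1)%g|.
  have hr : a%:R * c%:R = q%:R * d%:R :> rat by rewrite -!natrM hac hqd.
  set e : rat := if b then 1 else -1.
  rewrite (eq_bigr (fun _ => s%:R * ((g == 1%g)%:R * a%:R - (g \in G^`(1)%g)%:R * q%:R))).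
    rewrite sumr_const cardLy -mulr_natr.
    by field; rewrite s0.
  move=> M MLy; rewrite c1 // c2 // c3 // c4 //.
  have -> : forall u v : rat, a%:R * (s%:R * u + e * c%:R) - q%:R * (s%:R * v + e * d%:R)
      = s%:R * (u * a%:R - v * q%:R) + e * (a%:R * c%:R - q%:R * d%:R).
    by move=> u v; ring.
  by rewrite hr subrr mulr0 addr0.
rewrite /chi_S /chi_T !key; split => //; split.
  move=> gN; rewrite (negbTE gN).
  have -> : (g == 1%g) = false by apply: contraNF gN => /eqP ->; rewrite group1.
  by rewrite !mul0r subrr mulr0.
split.
  move=> gD gn1; rewrite gD (negbTE gn1) !mul0r !mul1r sub0r mulrN mulNr.
  done.
move=> g1; rewrite g1 eqxx group1 !mul1r.
have -> : #|'C_G[1%g]%g| = (s ^ 3)%N by rewrite cent11T setIT eG.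
done.
Qed.

End Geo.

Unset Implicit Arguments.
Local Open Scope ring_scope.

Theorem corollary2p8 (Pt : finType) (L : {set {set Pt}}) (s : nat) (P y : Pt)
    (G : {group {perm Pt}}) :
  ~~ odd s ->
  is_STGQ L s P G ->
  ~~ collinear L P y ->
  forall g : {perm Pt}, g \in U0 L P y G ->
    chi_S L s P y G g = chi_T L s P y G g /\
    (g \notin G^`(1)%g -> chi_S L s P y G g = 0) /\
    (g \in G^`(1)%g -> g != 1%g ->
       chi_S L s P y G g = - ((s.+1)%:R / (2 * s%:R)) * #|(G / G^`(1))%g|%:R) /\
    (g = 1%g ->
       chi_S L s P y G g = ((s.+1)%:R / (2 * s%:R)) * ((s ^ 3)%N%:R - #|(G / G^`(1))%g|%:R)).
Proof.
move=> seven [[hGQ hcoll hreg] [H [HsubG cardH Hsym]]] hy g gU.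
exact: (main_sec hGQ hcoll hreg hy HsubG cardH Hsym seven gU).
Qed.
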